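(* Let $\alpha=(a_1,\ldots,a_k)$ be a composition of a positive integer $n$. Then \[\zeta_-(M_\alpha)=\begin{cases}\dfrac{(-1)^{k_e(\alpha)}}{2^{2\lfloor k_o(\alpha)/2\rfloor}}\,C\bigl(0,\lfloor k_o(\alpha)/2\rfloor\bigr) & \text{if } a_k \text{ is odd},\\ 0 & \text{if } a_k\text{ is even;}\end{cases}\] \[\zeta_+(M_\alpha)=\begin{cases}\dfrac{(-1)^{k_e(\alpha)+1}}{2^{k_o(\alpha)}}\,C\bigl(1,k_o(\alpha)/2-1\bigr) & \text{if } a_1 \text{ and } a_k \text{ are odd and } n \text{ is even},\\ 1 & \text{if } \alpha=(n) \text{ and } n \text{ is even},\\ 0&\text{otherwise.}\end{cases}\] Also $\zeta_-(1)=\zeta_+(1)=1$.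
   Context: $\Bbbk$ is a field of characteristic $\neq 2$. A composition $\alpha=(a_1,\ldots,a_k)$ of $n\ge 0$ is a sequence of positive integers with sum $|\alpha|=n$; $k(\alpha)=k$ is its number of parts, $k_e(\alpha)$ and $k_o(\alpha)$ its numbers of even and odd parts; $()$ is the empty composition. ${\mathcal{Q}Sym}$ is the Hopf algebra of quasi-symmetric functions over $\Bbbk$ (in variables $x_1,x_2,\ldots$), graded by degree and connected, with monomial basis $M_\alpha=\sum_{i_1<\cdots<i_k}x_{i_1}^{a_1}\cdots x_{i_k}^{a_k}$ ($M_{()}=1$), product the ordinary product, coproduct $\Delta(M_\alpha)=\sum_{i=0}^k M_{(a_1,\ldots,a_i)}\otimes M_{(a_{i+1},\ldots,a_k)}$ and counit $\epsilon(M_\alpha)=1$ if $\alpha=()$, $0$ otherwise. Convolution of functionals: $\rho\psi=m\circ(\rho\otimes\psi)\circ\Delta$. Characters are algebra morphisms ${\mathcal{Q}Sym}\to\Bbbk$; they form a group under convolution. For a functional $\varphi$, $\bar\varphi(h)=(-1)^n\varphi(h)$ on homogeneous $h$ of degree $n$; $\varphi$ is even if $\bar\varphi=\varphi$, odd if $\bar\varphi=\varphi^{-1}$. Every character $\varphi$ factors uniquely as $\varphi=\varphi_+\varphi_-$ with $\varphi_+$ an even character and $\varphi_-$ an odd character. The universal character $\zeta$ is $\zeta(f)=f(1,0,0,\ldots)$; thus $\zeta(M_\alpha)=1$ if $\alpha=()$ or $\alpha=(n)$, and $0$ otherwise. $\zeta_+,\zeta_-$ denote its even and odd parts. The bivariate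 Catalan numbers are $C(m,n)=\frac{(2m)!(2n)!}{m!(m+n)!n!}$. *)

(* Defs.v *)
From mathcomp Require Import all_boot all_order all_algebra.
Set Implicit Arguments. Unset Strict Implicit. Unset Printing Implicit Defensive.
Import Order.TTheory GRing.Theory Num.Theory.
Local Open Scope ring_scope.

(* A linear functional on
   QSym is represented by its values on the monomial basis M_alpha, i.e. by a
   function on compositions (values on non-compositions are irrelevant). *)
Definition is_composition (a : seq nat) : bool := all (fun x => 0 < x)%N a.

Definition ke (a : seq nat) : nat := count (fun x => ~~ odd x) a.
Definition ko (a : seq nat) : nat := count odd a.

(* Quasi-shuffle (stuffle) product: M_a * M_b = sum_{g in qsh a b} M_g
   (with multiplicity). *)
Fixpoint qsh (a b : seq nat) {struct a} : seq (seq nat) :=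
  match a with
  | [::] => [:: b]
  | x :: a' =>
    let fix qsh_a (b : seq nat) : seq (seq nat) :=
      match b with
      | [::] => [:: a]
      | y :: b' => map (cons x) (qsh a' b) ++ map (cons y) (qsh_a b')
                   ++ map (cons (x + y)%N) (qsh a' b')
      end in qsh_a b
  end.

Section Functionals.
Variable K : fieldType.

Definition eps (a : seq nat) : K := if a is [::] then 1 else 0.

Definition conv (f g : seq nat -> K) (a : seq nat) : K :=
  \sum_(i < (size a).+1) f (take i a) * g (drop i a).

Definition bar (f : seq nat -> K) (a : seq nat) : K := (-1) ^+ sumn a * f a.

Definition is_character (f : seq nat -> K) : Prop :=
  f [::] = 1 /\
  forall a b, is_composition a -> is_composition b ->
    f a * f b = \sum_(g <- qsh a b) f g.

Definition is_even (f : seq nat -> K) : Prop :=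
  forall a, is_composition a -> bar f a = f a.

Definition is_odd (f : seq nat -> K) : Prop :=
  forall a, is_composition a ->
    conv (bar f) f a = eps a /\ conv f (bar f) a = eps a.

(* universal character zeta(f) = f(1,0,0,...) *)
Definition zeta (a : seq nat) : K :=
  match a with [::] => 1 | [:: _] => 1 | _ => 0 end.

End Functionals.

(* bivariate Catalan numbers C(m,n) = (2m)!(2n)!/(m!(m+n)!n!) (an integer) *)
Definition bcat (m n : nat) : nat :=
  ((m.*2)`! * (n.*2)`!) %/ (m`! * (m + n)`! * n`!).

(* Main.v *)
Require Import Defs.
From mathcomp Require Import all_boot all_order all_algebra.
From mathcomp Require Import zify ring.
Import GRing.Theory.

Lemma a_rec t : t.+1 * 'C(t.+1.*2, t.+1) = (4*t+2) * 'C(t.*2, t).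
Proof.
have h1 := mul_bin_diag (t.+1.*2) t.
have h2 := mul_bin_down (t.*2.+1) t.
rewrite doubleS /= in h1 h2 *.
have e : t.*2.+1 - t = t.+1 by lia.
rewrite e in h2.
apply/eqP; rewrite -(eqn_pmul2l (ltn0Sn t)); apply/eqP.
set C1 := 'C(_, t) in h1 h2.
move: h1 h2. set C' := 'C(_,_). set C := 'C(_,_).
move=> h1 h2.
nia.
Qed.

Lemma sum_rev (F : nat -> nat -> nat) M :
  \sum_(t < M.+1) F t (M - t) = \sum_(t < M.+1) F (M - t) t.
Proof.
rewrite (reindex_inj rev_ord_inj) /=; apply: eq_bigr => i _.
rewrite subSS; congr F; have := ltn_ord i; lia.
Qed.

Lemma binsum M : \sum_(t < M.+1) 'C(t.*2, t) * 'C((M-t).*2, M-t) = 4^M.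
Proof.
set a := fun t => 'C(t.*2, t).
have Hrev : forall N, \sum_(t < N.+1) (N - t) * (a t * a (N - t)) =
                      \sum_(t < N.+1) t * (a t * a (N - t)).
  move=> N.
  rewrite (sum_rev (fun x y => y * (a x * a y))) /=.
  apply: eq_bigr => i _; have := ltn_ord i => hi.
  by rewrite [a (N - i) * _]mulnC.
have Hsplit : forall N, \sum_(t < N.+1) N * (a t * a (N - t)) =
                      2 * \sum_(t < N.+1) t * (a t * a (N - t)).
  move=> N.
  have -> : \sum_(t < N.+1) N * (a t * a (N - t)) =
     \sum_(t < N.+1) (t * (a t * a (N - t)) + (N - t) * (a t * a (N - t))).
    apply: eq_bigr => i _; have := ltn_ord i => hi; rewrite -mulnDl; congr (_ * _); lia.
  by rewrite big_split /= Hrev mul2n addnn.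
elim: M => [|M IH]; first by rewrite big_ord1.
rewrite expnS -IH.
apply/eqP; rewrite -(eqn_pmul2l (ltn0Sn M)); apply/eqP.
rewrite big_distrr Hsplit.
have E2 : \sum_(t < M.+2) t * (a t * a (M.+1 - t)) =
    \sum_(t < M.+1) (4*t+2) * (a t * a (M - t)).
  rewrite big_ord_recl /= mul0n add0n; apply: eq_bigr => i _.
  by rewrite /bump /= add1n subSS mulnA a_rec mulnA.
rewrite E2.
have E4 : \sum_(t < M.+1) (4*t+2) * (a t * a (M - t)) =
    2 * (2 * \sum_(t < M.+1) (t * (a t * a (M - t)))) + 2 * \sum_(t < M.+1) (a t * a (M - t)).
  rewrite !big_distrr -big_split /=.
  apply: eq_bigr => i _; nia.
rewrite E4.
have E5 : M.+1 * (4 * \sum_(t < M.+1) a t * a (M - t)) =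
   4 * (M * \sum_(t < M.+1) a t * a (M - t)) + 4 * \sum_(t < M.+1) a t * a (M - t) by nia.
rewrite E5 [M * _]big_distrr /= Hsplit.
set S1 := \sum_(t < M.+1) t * _. set S0 := \sum_(t < M.+1) a t * _. lia.
Qed.

Lemma bcat0 m : bcat 0 m = 'C(m.*2, m).
Proof.
rewrite /bcat /= mul1n add0n.
have h : m <= m.*2 by lia.
rewrite -(bin_fact h).
have -> : m.*2 - m = m by lia.
by rewrite fact0 mul1n mulnK // muln_gt0 !fact_gt0.
Qed.

Lemma bcat1 n : bcat 1 n + 'C(n.+1.*2, n.+1) = 4 * 'C(n.*2, n).
Proof.
rewrite /bcat /=.
have h : n <= n.*2 by lia.
rewrite -(bin_fact h).
have -> : n.*2 - n = n by lia.
rewrite add1n factS.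
have hr := a_rec n.
set a := 'C(n.*2, n) in hr *. set b := 'C(_, _) in hr *.
have -> : 2 * (a * (n`! * n`!)) = (2 * a) * (n`! * n`!) by rewrite mulnA.
have -> : 1 * (n.+1 * n`!) * n`! = n.+1 * (n`! * n`!) by rewrite mul1n mulnA.
rewrite divnMr ?muln_gt0 ?fact_gt0 //.
have e : 2 * a = (4 * a - b) * n.+1 by nia.
rewrite e mulnK //. nia.
Qed.

Local Open Scope ring_scope.

Definition cc (K : fieldType) (m : nat) : K := (bcat 0 m)%:R / (2 ^ (2 * m))%:R.
Definition dd (K : fieldType) (m : nat) : K := (bcat 1 m.-1)%:R / (2 ^ (2 * m))%:R.

Lemma pow2_neq0 (K : fieldType) (h2 : (2%:R : K) != 0) n : (2 ^ n)%:R != 0 :> K.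
Proof. by rewrite natrX expf_neq0. Qed.

Lemma cc0 (K : fieldType) : cc K 0 = 1.
Proof. by rewrite /cc bcat0 /= bin0 divr1. Qed.

Lemma cc_sum (K : fieldType) (h2 : (2%:R : K) != 0) M :
  \sum_(t < M.+1) cc K t * cc K (M - t) = 1.
Proof.
have -> : \sum_(t < M.+1) cc K t * cc K (M - t) =
   \sum_(t < M.+1) ('C(t.*2, t) * 'C((M-t).*2, M-t))%:R / (2 ^ (2 * M))%:R.
  apply: eq_bigr => i _; have := ltn_ord i => hi.
  rewrite /cc !bcat0 mulf_div -!natrM -expnD.
  by have -> : (2 * i + 2 * (M - i) = 2 * M)%N by lia.
rewrite -mulr_suml -natr_sum binsum.
have -> : (4 ^ M = 2 ^ (2 * M))%N by rewrite expnM.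
by rewrite divff // pow2_neq0.
Qed.

Lemma dd_cc (K : fieldType) (h2 : (2%:R : K) != 0) m :
  dd K m.+1 = cc K m - cc K m.+1.
Proof.
have e : (bcat 1 m)%:R = (4 * 'C(m.*2, m))%:R - ('C(m.+1.*2, m.+1))%:R :> K.
  by rewrite -bcat1 natrD addrK.
rewrite /dd /cc !bcat0 /= e.
have -> : (2 ^ (2 * m.+1) = 4 * 2 ^ (2 * m))%N by rewrite mulnS expnD.
have h4 : (4%:R : K) != 0.
  by have -> : (4 = 2 ^ 2)%N by []; rewrite pow2_neq0.
have hp := @pow2_neq0 K h2 (2 * m).
rewrite !natrM.
field.
by rewrite hp h4.
Qed.

Lemma sum_parity (K : fieldType) (f : nat -> K) N :
  \sum_(j < N.+1) f j =
  \sum_(m < N./2.+1) f m.*2 + \sum_(m < uphalf N) f m.*2.+1.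
Proof.
elim: N => [|N IH]; first by rewrite !big_ord1 big_ord0 addr0.
rewrite big_ord_recr /= IH /=.
case hN: (odd N).
- have hu : uphalf N = (N./2).+1 by rewrite uphalf_half hN.
  rewrite hu [in RHS](big_ord_recr (N./2).+1) /=.
  have -> : ((N./2).+1).*2 = N.+1.
    have := odd_double_half N; rewrite hN /=; lia.
  by rewrite addrAC.
- have hu : uphalf N = N./2 by rewrite uphalf_half hN.
  rewrite hu [X in _ = _ + X]big_ord_recr /=.
  have -> : (N./2).*2.+1 = N.+1.
    have := odd_double_half N; rewrite hN /=; lia.
  by rewrite addrA.
Qed.

Lemma identA (K : fieldType) (h2 : (2%:R : K) != 0) N : (0 < N)%N ->
  \sum_(j < N.+1) (-1) ^+ j * cc K j./2 * cc K (N - j)./2 = 0.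
Proof.
move=> hN.
rewrite (@sum_parity K (fun j : nat => (-1) ^+ j * cc K j./2 * cc K (N - j)./2)) /=.
have -> : \sum_(m < N./2.+1) (-1) ^+ m.*2 * cc K (m.*2)./2 * cc K (N - m.*2)./2 =
          \sum_(m < N./2.+1) cc K m * cc K (N./2 - m).
  apply: eq_bigr => i _; have := ltn_ord i => hi.
  rewrite -signr_odd odd_double expr0 mul1r doubleK; congr (_ * cc K _); lia.
have [U hU] : exists U, uphalf N = U.+1 by exists (uphalf N).-1; rewrite uphalf_half; lia.
rewrite hU.
have -> : \sum_(m < U.+1) (-1) ^+ m.*2.+1 * cc K (m.*2.+1)./2 * cc K (N - m.*2.+1)./2 =
          - \sum_(m < U.+1) cc K m * cc K (U - m).
  rewrite -sumrN; apply: eq_bigr => i _; have := ltn_ord i => hi.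
  rewrite -signr_odd /= odd_double expr1 mulN1r.
  rewrite uphalf_double.
  have -> : (N - i.*2.+1)./2 = (U - i)%N by move: hU; rewrite uphalf_half; lia.
  by rewrite mulNr.
by rewrite !cc_sum // subrr.
Qed.


Definition ZM (K : fieldType) (a : seq nat) : K :=
  if a is [::] then 1 else
  (if odd (last 0%N a)
   then (-1) ^+ ke a / (2 ^ (2 * (ko a)./2))%:R * (bcat 0 (ko a)./2)%:R
   else 0).

Definition ZP (K : fieldType) (a : seq nat) : K :=
  if a is [::] then 1 else
  (if [&& odd (head 0%N a), odd (last 0%N a) & ~~ odd (sumn a)]
   then (-1) ^+ (ke a).+1 / (2 ^ ko a)%:R * (bcat 1 ((ko a)./2 - 1))%:R
   else if (size a == 1%N) && ~~ odd (sumn a) then 1 else 0).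

Definition W (K : fieldType) (u : seq nat) : K := (-1) ^+ ke u * cc K (ko u)./2.

Lemma ZM_W (K : fieldType) a :
  ZM K a = if (a == [::]) || odd (last 0%N a) then W K a else 0.
Proof.
case: a => [|x s] /=; first by rewrite /W /ke /ko /= expr0 mul1r cc0.
case: ifP => // _.
by rewrite /W /cc -mulrA [_^-1 * _]mulrC.
Qed.

Lemma take_cond (a : seq nat) (i : nat) : (i <= size a)%N ->
  (take i a == [::]) || odd (last 0%N (take i a)) = (i == 0%N) || odd (nth 0%N a i.-1).
Proof.
case: i => [|i] hi /=; first by rewrite take0.
have hs : size (take i.+1 a) = i.+1 by rewrite size_take; case: ltnP => //; lia.
have -> : (take i.+1 a == [::]) = false by apply/eqP => e; rewrite e in hs.
by rewrite /= -nth_last hs /= nth_take.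
Qed.

Lemma last_drop (a : seq nat) i : drop i a != [::] -> last 0%N (drop i a) = last 0%N a.
Proof.
rewrite -[in RHS](cat_take_drop i a) last_cat.
by case: (drop i a).
Qed.

Lemma odd_last_ko (a : seq nat) : odd (last 0%N a) -> (0 < ko a)%N.
Proof.
move=> h; rewrite /ko -has_count; apply/hasP; exists (last 0%N a) => //.
have := mem_last 0%N a; rewrite inE => /orP [/eqP e|//].
by rewrite e in h.
Qed.

Lemma sign_sumn (K : fieldType) (u : seq nat) : (-1) ^+ sumn u = (-1) ^+ ko u :> K.
Proof.
elim: u => [|x u IH] //=.
by rewrite /ko /= !exprD IH -signr_odd.
Qed.

Lemma odd_sumn (u : seq nat) : odd (sumn u) = odd (ko u).
Proof. elim: u => [|x u IH] //=. by rewrite /ko /= !oddD IH; case: (odd x). Qed.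

Lemma ke_split (a : seq nat) i : (ke (take i a) + ke (drop i a) = ke a)%N.
Proof. by rewrite /ke -count_cat cat_take_drop. Qed.

Lemma ko_split (a : seq nat) i : (ko (take i a) + ko (drop i a) = ko a)%N.
Proof. by rewrite /ko -count_cat cat_take_drop. Qed.

Lemma sum_opos (K : fieldType) (a : seq nat) (phi : nat -> K) :
  \sum_(i < (size a).+1) (if ((i : nat) == 0%N) || odd (nth 0%N a i.-1) then phi (ko (take i a)) else 0)
  = \sum_(j < (ko a).+1) phi j.
Proof.
elim: a phi => [|x a IH] phi; first by rewrite !big_ord1.
rewrite big_ord_recl /=.
have E : forall i : 'I_(size a).+1,
   (if ((lift ord0 i : nat) == 0%N) || odd (nth 0%N (x :: a) (lift ord0 i).-1)
    then phi (ko (take (lift ord0 i) (x :: a))) else 0)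
   = if odd (nth 0%N (x :: a) i) then phi (odd x + ko (take i a))%N else 0.
  by move=> i; rewrite lift0 /=.
rewrite (eq_bigr _ (fun i _ => E i)).
case hx: (odd x).
- have -> : \sum_(i < (size a).+1)
      (if odd (nth 0%N (x :: a) i) then phi (true + ko (take i a))%N else 0) =
      \sum_(i < (size a).+1)
      (if ((i : nat) == 0%N) || odd (nth 0%N a i.-1) then (fun j => phi j.+1) (ko (take i a)) else 0).
    apply: eq_bigr => -[[|i] hi] _ //=; by rewrite hx.
  have hk : ko (x :: a) = (ko a).+1 by rewrite /ko /= hx.
  rewrite (IH (fun j => phi j.+1)) add1n [in RHS]big_ord_recl /=.
  by congr (_ + _); apply: eq_bigr => i _; rewrite lift0.
- have -> : \sum_(i < (size a).+1)
      (if odd (nth 0%N (x :: a) i) then phi (false + ko (take i a))%N else 0) =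
      \sum_(i < (size a).+1)
      ((if ((i : nat) == 0%N) || odd (nth 0%N a i.-1) then phi (ko (take i a)) else 0)
        - (if (i : nat) == 0%N then phi 0%N else 0)).
    apply: eq_bigr => -[[|i] hi] _ /=; first by rewrite hx take0 subrr.
    by rewrite subr0.
  have D : \sum_(i < (size a).+1) (if (i : nat) == 0%N then phi 0%N else 0) = phi 0%N.
    rewrite big_ord_recl /=.
    rewrite [X in _ + X](eq_bigr (fun _ => 0)) ?big1_eq ?addr0 // => i _.
  by rewrite sumrB IH D addrC subrK.
Qed.


Lemma drop_cond (a : seq nat) i : odd (last 0%N a) ->
  (drop i a == [::]) || odd (last 0%N (drop i a)).
Proof. by move=> hl; case: eqP => //= /eqP hne; rewrite last_drop. Qed.

Lemma E3 (K : fieldType) (h2 : (2%:R : K) != 0) a : a != [::] ->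
  conv (bar (ZM K)) (ZM K) a = 0.
Proof.
move=> ha; rewrite /conv.
case: (boolP (odd (last 0%N a))) => hl.
- set N := ko a.
  pose phi := fun j => (-1) ^+ ke a * ((-1) ^+ j * cc K j./2 * cc K (N - j)./2).
  rewrite (eq_bigr (fun i : 'I_(size a).+1 => if ((i:nat) == 0%N) || odd (nth 0%N a i.-1)
     then phi (ko (take i a)) else 0)).
    by rewrite sum_opos /phi -big_distrr /= identA ?mulr0 // odd_last_ko.
  move=> i _; have hi : (i <= size a)%N by rewrite -ltnS.
  rewrite /bar !ZM_W -take_cond // drop_cond //.
  case: ifP => _; last by rewrite mulr0 mul0r.
  rewrite /W sign_sumn.
  have e1 := ke_split a i; have e2 := ko_split a i.
  have -> : ko (drop i a) = (N - ko (take i a))%N by rewrite /N -e2 addKn.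
  rewrite /phi -e1 exprD /=. ring.
- rewrite big1 // => i _.
  rewrite /bar !ZM_W.
  case hd: (drop i a == [::]) => /=.
  + have hsz : (size a <= i)%N.
      by move/eqP: hd => hd; have := size_drop i a; rewrite hd /=; lia.
    by rewrite take_oversize // (negbTE ha) (negbTE hl) /= mulr0 mul0r.
  + by rewrite last_drop ?hd // (negbTE hl) mulr0.
Qed.


Lemma last_take (a : seq nat) i : (i < size a)%N -> last 0%N (take i.+1 a) = nth 0%N a i.
Proof.
move=> hi.
have hs : size (take i.+1 a) = i.+1 by rewrite size_take; case: ltnP => //; lia.
by rewrite -nth_last hs /= nth_take.
Qed.

Lemma ZP_head_odd (K : fieldType) x u : odd x ->
  ZP K (x :: u) = if odd (last 0%N (x :: u)) && ~~ odd (ko (x :: u))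
                  then - ((-1) ^+ ke (x :: u) * dd K (ko (x :: u))./2) else 0.
Proof.
move=> hx.
rewrite /ZP; have -> : head 0%N (x :: u) = x by []. rewrite hx andTb !odd_sumn.
case: ifP => [/andP [hl he]|hf].
- rewrite /dd exprS mulN1r.
  have -> : (2 * (ko (x :: u))./2 = ko (x :: u))%N.
    by rewrite mul2n even_halfK.
  rewrite subn1. by rewrite !mulNr -mulrA [_^-1 * _]mulrC.
- case: u hf => [|z u] hf //=.
  by rewrite /ko /= hx.
Qed.

Lemma E1 (K : fieldType) (h2 : (2%:R : K) != 0) a : a != [::] ->
  conv (ZP K) (ZM K) a = zeta K a.
Proof.
case: a => [//|x s] _.
case: (boolP (odd (last 0%N (x :: s)))) => hl; last first.
  rewrite /conv big_ord_recr /= big1; last first.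
    move=> i _; rewrite ZM_W.
    have hne : drop i (x :: s) != [::].
      by rewrite -size_eq0 size_drop /=; have := ltn_ord i; lia.
    by rewrite (negbTE hne) last_drop // (negbTE hl) mulr0.
  rewrite add0r take_size drop_size mulr1 /ZP.
  move: hl => /= /negbTE hl; rewrite hl andbF.
  case: s hl => [|y s] hl /=; last by [].
  by rewrite addn0 hl.
case hx: (odd x).
- case: s hl => [|y s] hl.
    rewrite /conv big_ord_recl big_ord1 /=.
    rewrite /ZM /ZP /ke /ko /= !addn0 hx /= expr0 bcat0 /= bin0 !divr1.
    by rewrite !mul1r mul0r addr0.
  rewrite /conv.
  set a := x :: y :: s in hl *.
  set N := ko a. set s0 : K := (-1) ^+ ke a.
  pose psi := fun j : nat => if j == 0%N then s0 * cc K N./2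
      else if odd j then 0 else - (s0 * dd K j./2 * cc K (N - j)./2).
  rewrite (eq_bigr (fun i : 'I_(size a).+1 => if ((i:nat) == 0%N) || odd (nth 0%N a i.-1)
     then psi (ko (take i a)) else 0)).
    rewrite sum_opos.
    have hN : (2 <= N)%N.
      have := odd_last_ko (y :: s) hl.
      by rewrite /N /a /ko /= hx.
    rewrite (@sum_parity K psi) [X in _ + X]big1 ?addr0; last first.
      by move=> m _; rewrite /psi /= odd_double.
    have [M hM] : exists M, N./2 = M.+1 by exists (N./2).-1; lia.
    rewrite hM big_ord_recl /=.
    have E : forall m : 'I_M.+1, psi (lift ord0 m).*2 = - s0 * ((cc K m - cc K m.+1) * cc K (M - m)).
      move=> m; have := ltn_ord m => hm.
      rewrite lift0 /psi doubleS /= odd_double /= -doubleS doubleK dd_cc //.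
      have -> : ((N - m.+1.*2)./2 = M - m)%N by lia.
      ring.
    rewrite (eq_bigr _ (fun m _ => E m)) -big_distrr /=.
    have E2 : \sum_(m < M.+1) (cc K m - cc K m.+1) * cc K (M - m) =
              \sum_(m < M.+1) cc K m * cc K (M - m) - \sum_(m < M.+1) cc K m.+1 * cc K (M - m).
      by rewrite -sumrB; apply: eq_bigr => m _; rewrite mulrBl.
    have E3 : \sum_(m < M.+1) cc K m.+1 * cc K (M - m) = 1 - cc K 0 * cc K M.+1.
      rewrite -(@cc_sum K h2 M.+1) [X in _ = X - _]big_ord_recl subn0 [_ + \sum_(_ < _) _]addrC addrK.
      by apply: eq_bigr => m _; rewrite lift0 subSS.
    rewrite E2 E3 cc_sum // cc0 /psi /= hM.
    ring.
  move=> [[|i] hi] _.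
    have e0 : (Ordinal hi : nat) = 0%N by []. rewrite e0 take0 drop0 eqxx orTb ZM_W hl orbT /psi eqxx /W (_ : ZP K [::] = 1) // mul1r.
    done.
  have hi' : (i < size a)%N by [].
  rewrite ZM_W drop_cond //.
  have ht : take i.+1 a = x :: take i (y :: s) by [].
  rewrite ht ZP_head_odd // -ht last_take //.
  rewrite [(_ == 0%N) || _]/=.
  case: (odd (nth 0%N a i)); last by rewrite /= mul0r.
  have hj : (ko (take i.+1 a) != 0)%N by rewrite ht /ko /= hx.
  rewrite /psi (negbTE hj).
  have e0 : (Ordinal hi : nat) = i.+1 by [].
  rewrite e0.
  case: (boolP (odd (ko (take i.+1 a)))) => ho.
    by rewrite [true && _]/= mul0r.
  rewrite [true && _]/=.
  have e2 := ko_split a i.+1.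
  rewrite /W.
  have -> : ko (drop i.+1 a) = (N - ko (take i.+1 a))%N by rewrite /N -e2 addKn.
  rewrite /s0 -(ke_split a i.+1) exprD.
  ring.
case: s hl => [|y s] hl.
  by move: hl; rewrite /= hx.
rewrite /conv big_ord_recl big_ord_recl big1 ?addr0; last first.
  by move=> i _; rewrite !lift0 /ZP /= hx /= mul0r.
have e1 : ZP K [:: x] = 1 by rewrite /ZP /= addn0 hx.
have e2 : ZM K (x :: y :: s) = - ZM K (y :: s).
  rewrite !ZM_W /=.
  have hl' : odd (last y s) by [].
  rewrite hl' /W.
  have -> : ke [:: x, y & s] = (ke (y :: s)).+1 by rewrite /ke /= hx.
  have -> : ko [:: x, y & s] = ko (y :: s) by rewrite /ko /= hx.
  by rewrite exprS mulN1r mulNr.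
have -> : take ord0 [:: x, y & s] = [::] by [].
have -> : drop ord0 [:: x, y & s] = [:: x, y & s] by [].
have -> : take (lift ord0 ord0) [:: x, y & s] = [:: x] by [].
have -> : drop (lift ord0 ord0) [:: x, y & s] = y :: s by [].
rewrite e1 e2 (_ : ZP K [::] = 1) // (_ : zeta K [:: x, y & s] = 0) //.
by rewrite mul1r mul1r addNr.
Qed.


Lemma conv_split (K : fieldType) (f g : seq nat -> K) (x : nat) (s : seq nat) :
  conv f g (x :: s) = f [::] * g (x :: s)
    + \sum_(i < size s) f (take i.+1 (x :: s)) * g (drop i.+1 (x :: s))
    + f (x :: s) * g [::].
Proof.
rewrite /conv big_ord_recl big_ord_recr addrA.
congr (_ + _ + _).
by rewrite lift0 /= take_size drop_size.
Qed.

Lemma solve2 (K : fieldType) (h2 : (2%:R : K) != 0) (sg A B A' B' M1 M3 : K) :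
  sg = 1 \/ sg = -1 ->
  A + M1 + B = A' + M1 + B' -> A + M3 + sg * A = 0 -> A' + M3 + sg * A' = 0 ->
  sg * B = B -> sg * B' = B' -> A = A' /\ B = B'.
Proof.
move=> hs e1 e3 e3' e2 e2'.
have f1 : (A - A') + (B - B') = 0.
  have -> : (A - A') + (B - B') = (A + M1 + B) - (A' + M1 + B') by ring.
  by rewrite e1 subrr.
have f3 : (A - A') * (1 + sg) = 0.
  have -> : (A - A') * (1 + sg) = (A + M3 + sg * A) - (A' + M3 + sg * A') by ring.
  by rewrite e3 e3' subrr.
have f2 : (B - B') * (1 - sg) = 0.
  have -> : (B - B') * (1 - sg) = (B - sg * B) - (B' - sg * B') by ring.
  by rewrite e2 e2' !subrr.
have h2' : (1 + 1 : K) != 0 by rewrite -mulr2n.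
case: hs => hs; rewrite hs in f3 f2.
- move/eqP: f3; rewrite mulf_eq0 (negbTE h2') orbF subr_eq0 => /eqP hA.
  rewrite hA subrr add0r in f1.
  by move/eqP: f1; rewrite subr_eq0 => /eqP.
- move/eqP: f2; rewrite opprK mulf_eq0 (negbTE h2') orbF subr_eq0 => /eqP hB.
  rewrite hB subrr addr0 in f1.
  by move/eqP: f1; rewrite subr_eq0 => /eqP.
Qed.

Lemma ZP_even (K : fieldType) a : (-1) ^+ sumn a * ZP K a = ZP K a.
Proof.
case: a => [|x s]; first by rewrite /= expr0 mul1r.
rewrite -signr_odd /ZP.
have [ho|he] := boolP (~~ odd (sumn (x :: s))).
  by rewrite (negbTE ho) expr0 mul1r.
by rewrite !andbF /= mulr0.
Qed.

Lemma main_eq (K : fieldType) (h2 : (2%:R : K) != 0) (zp zm : seq nat -> K) :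
  is_character zp -> is_character zm -> is_even zp -> is_odd zm ->
  (forall a, is_composition a -> zeta K a = conv zp zm a) ->
  forall a, is_composition a -> zm a = ZM K a /\ zp a = ZP K a.
Proof.
move=> [hp0 _] [hm0 _] He Ho Hz a.
have [n] := ubnP (size a); elim: n a => // n IH [|x s] hsz hc.
  by rewrite hm0 hp0.
have comp_take : forall i, is_composition (take i (x :: s)).
  move=> i; have : is_composition (take i (x :: s) ++ drop i (x :: s)) by rewrite cat_take_drop.
  by rewrite /is_composition all_cat => /andP[].
have comp_drop : forall i, is_composition (drop i (x :: s)).
  move=> i; have : is_composition (take i (x :: s) ++ drop i (x :: s)) by rewrite cat_take_drop.
  by rewrite /is_composition all_cat => /andP[].
have IHt : forall i : 'I_(size s), zm (take i.+1 (x :: s)) = ZM K (take i.+1 (x :: s))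
        /\ zp (take i.+1 (x :: s)) = ZP K (take i.+1 (x :: s)).
  move=> i; apply: IH (comp_take _).
  rewrite size_take_min; have := ltn_ord i; move: hsz => /=; lia.
have IHd : forall i : 'I_(size s), zm (drop i.+1 (x :: s)) = ZM K (drop i.+1 (x :: s))
        /\ zp (drop i.+1 (x :: s)) = ZP K (drop i.+1 (x :: s)).
  move=> i; apply: IH (comp_drop _).
  rewrite size_drop; have := ltn_ord i; move: hsz => /=; lia.
have h1 := Hz _ hc.
rewrite conv_split hp0 hm0 mul1r mulr1 in h1.
have h1' := @E1 K h2 (x :: s) isT.
rewrite conv_split (_ : ZP K [::] = 1) // (_ : ZM K [::] = 1) // mul1r mulr1 in h1'.
have h3 := (Ho _ hc).1.
rewrite conv_split /bar hm0 (_ : sumn [::] = 0%N) // expr0 !mul1r mulr1 in h3.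
have h3' := @E3 K h2 (x :: s) isT.
rewrite conv_split /bar (_ : ZM K [::] = 1) // (_ : sumn [::] = 0%N) // expr0 !mul1r mulr1 in h3'.
have he := He _ hc; rewrite /bar in he.
have he' := ZP_even K (x :: s).
have M1 : \sum_(i < size s) zp (take i.+1 (x :: s)) * zm (drop i.+1 (x :: s)) =
          \sum_(i < size s) ZP K (take i.+1 (x :: s)) * ZM K (drop i.+1 (x :: s)).
  by apply: eq_bigr => i _; rewrite (IHt i).2 (IHd i).1.
have M3 : \sum_(i < size s) (-1) ^+ sumn (take i.+1 (x :: s)) * zm (take i.+1 (x :: s)) * zm (drop i.+1 (x :: s)) =
          \sum_(i < size s) (-1) ^+ sumn (take i.+1 (x :: s)) * ZM K (take i.+1 (x :: s)) * ZM K (drop i.+1 (x :: s)).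
  by apply: eq_bigr => i _; rewrite (IHt i).1 (IHd i).1.
rewrite M1 in h1. rewrite M3 in h3.
have hs : (-1) ^+ sumn (x :: s) = 1 :> K \/ (-1) ^+ sumn (x :: s) = -1 :> K.
  by rewrite -signr_odd; case: (odd _); [right; rewrite expr1 | left; rewrite expr0].
have e1 : zm (x :: s) + \sum_(i < size s) ZP K (take i.+1 (x :: s)) * ZM K (drop i.+1 (x :: s)) + zp (x :: s)
        = ZM K (x :: s) + \sum_(i < size s) ZP K (take i.+1 (x :: s)) * ZM K (drop i.+1 (x :: s)) + ZP K (x :: s).
  by rewrite -h1 h1'.
rewrite (_ : eps K (x :: s) = 0) // in h3.
exact: (@solve2 K h2 _ _ _ _ _ _ _ hs e1 h3 h3' he he').
Qed.


Theorem theorem3p2 (K : fieldType) (char2 : (2%:R : K) != 0)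
    (zp zm : seq nat -> K) :
  is_character zp -> is_character zm -> is_even zp -> is_odd zm ->
  (forall a, is_composition a -> zeta K a = conv zp zm a) ->
  zm [::] = 1 /\ zp [::] = 1 /\
  forall a : seq nat, is_composition a -> (0 < sumn a)%N ->
    zm a = (if odd (last 0%N a)
            then (-1) ^+ ke a / (2 ^ (2 * (ko a)./2))%:R * (bcat 0 (ko a)./2)%:R
            else 0) /\
    zp a = (if [&& odd (head 0%N a), odd (last 0%N a) & ~~ odd (sumn a)]
            then (-1) ^+ (ke a).+1 / (2 ^ ko a)%:R * (bcat 1 ((ko a)./2 - 1))%:R
            else if (size a == 1%N) && ~~ odd (sumn a) then 1 else 0).
Proof.
move=> Hp Hm He Ho Hz.
have Hmain := @main_eq K char2 zp zm Hp Hm He Ho Hz.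
split; first by case: Hm.
split; first by case: Hp.
move=> [|x s] hc hs; first by [].
have [e1 e2] := Hmain _ hc.
by rewrite e1 e2.
Qed.
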